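(* Let $\mathcal{P}$ and $\mathcal{N}$ be disjoint finite index sets (positives and negatives) with $|\mathcal{P}|\ge 1$. Let $(s_i)_{i\in\mathcal{P}\cup\mathcal{N}}$ be real logits, pairwise distinct, and for each $i\in\mathcal{P}$ let $\mathrm{IoU}_i\in[0,1]$. Take the smoothing parameter $\delta=0$, i.e. $H(x)=1$ for $x>0$ and $H(x)=0$ for $x<0$. Then, for every index $i\in\mathcal{P}\cup\mathcal{N}$, the Bucketed AP Loss gradient equals the AP Loss gradient, $\frac{\partial\mathcal{L}_{BAP}}{\partial s_i}=\frac{\partial\mathcal{L}_{AP}}{\partial s_i}$, and the Bucketed RS Loss gradient equals the RS Loss gradient, $\frac{\partial\mathcal{L}_{BRS}}{\partial s_i}=\frac{\partial\mathcal{L}_{RS}}{\partial s_i}$, where all four quantities are defined as in the context.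
   Context: Notation. $x_{ij}=s_j-s_i$. For $i\in\mathcal{P}$: $N_{FP}(i)=\sum_{j\in\mathcal{N}}H(x_{ij})$, $\mathrm{rank}(i)=1+\sum_{j\in\mathcal{P}\cup\mathcal{N},\,j\ne i}H(x_{ij})$, $\mathrm{rank}^+(i)=1+\sum_{j\in\mathcal{P},\,j\neq i}H(x_{ij})$ (the self-term counts as $1$). Convention: a ratio with zero denominator is $0$. Ranking error $\ell_R(i)=N_{FP}(i)/\mathrm{rank}(i)$, ranking pmf $p_R(j|i)=H(x_{ij})/N_{FP}(i)$ for $j\in\mathcal{N}$. Sorting error $\ell_S(i)=\frac{1}{\mathrm{rank}^+(i)}\sum_{j\in\mathcal{P}}H(x_{ij})(1-\mathrm{IoU}_j)$; target sorting error $\ell^*_S(i)=\frac{\sum_{j\in\mathcal{P}}H(x_{ij})[\mathrm{IoU}_j\ge \mathrm{IoU}_i](1-\mathrm{IoU}_j)}{\sum_{j\in\mathcal{P}}H(x_{ij})[\mathrm{IoU}_j\ge\mathrm{IoU}_i]}$; sorting pmf $p_S(j|i)=\frac{H(x_{ij})[\mathrm{IoU}_j<\mathrm{IoU}_i]}{\sum_{k\in\mathcal{P}}H(x_{ik})[\mathrm{IoU}_k<\mathrm{IoU}_i]}$ for $j\in\mathcal{P}$ ($[\cdot]$ is the Iverson bracket; in these $\mathcal{P}$-sums the term $j=i$ uses $H(x_{ii}):=1$). AP Loss gradients (identity update): for $i\in\mathcal{P}$, $\frac{\partial\mathcal{L}_{AP}}{\partial s_i}=-\frac{1}{|\mathcal{P}|}\ell_R(i)$;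 for $i\in\mathcal{N}$, $\frac{\partial\mathcal{L}_{AP}}{\partial s_i}=\frac{1}{|\mathcal{P}|}\sum_{j\in\mathcal{P}}\ell_R(j)p_R(i|j)$. RS Loss gradients: for $i\in\mathcal{N}$ they equal the AP Loss gradients; for $i\in\mathcal{P}$, $\frac{\partial\mathcal{L}_{RS}}{\partial s_i}=\frac{1}{|\mathcal{P}|}\big(-\ell_R(i)+\ell^*_S(i)-\ell_S(i)+\sum_{j\in\mathcal{P}}(\ell_S(j)-\ell^*_S(j))p_S(i|j)\big)$. Buckets. Sort all logits decreasingly; the positives appear as $\hat s^+_1>\dots>\hat s^+_{|\mathcal{P}|}$. Bucket $B_1$ is the set of negatives with logit $>\hat s^+_1$, $B_k$ ($2\le k\le|\mathcal{P}|$) the negatives with logit in $(\hat s^+_k,\hat s^+_{k-1})$, $B_{|\mathcal{P}|+1}$ the negatives with logit $<\hat s^+_{|\mathcal{P}|}$; $b_k=|B_k|$. For nonempty $B_k$, the prototype logit $s^b_k$ is the mean of the logits in $B_k$, and $x^b_{ik}=s^b_k-s_i$. For $i\in\mathcal{P}$: $N^b_{FP}(i)=\sum_{k:b_k>0}H(x^b_{ik})b_k$, bucketed ranking error $\ell^b_R(i)=\frac{N^b_{FP}(i)}{\sum_{j\in\mathcal{P}}H(x_{ij})+N^b_{FP}(i)}$ (with $H(x_{ii}):=1$), and bucket pmf $p(k^b|i)=\frac{b_kH(x^b_{ik})}{N^b_{FP}(i)}$. Bucketed AP Loss gradients: for $i\in\mathcal{P}$, $\frac{\partial\mathcal{L}_{BAP}}{\partial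 s_i}=-\frac{1}{|\mathcal{P}|}\ell^b_R(i)$; for a negative $i\in B_k$, $\frac{\partial\mathcal{L}_{BAP}}{\partial s_i}=\frac{1}{|\mathcal{P}|}\sum_{j\in\mathcal{P}}\ell^b_R(j)\,p(k^b|j)\,\frac{1}{b_k}$. Bucketed RS Loss gradients: for negatives equal to the Bucketed AP gradients; for $i\in\mathcal{P}$, $\frac{\partial\mathcal{L}_{BRS}}{\partial s_i}=\frac{1}{|\mathcal{P}|}\big(-\ell^b_R(i)+\ell^*_S(i)-\ell_S(i)+\sum_{j\in\mathcal{P}}(\ell_S(j)-\ell^*_S(j))p_S(i|j)\big)$. *)

(* Defs.v *)
From mathcomp Require Import all_boot all_order all_algebra.
Set Implicit Arguments. Unset Strict Implicit. Unset Printing Implicit Defensive.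
Import Order.TTheory GRing.Theory Num.Theory.
Local Open Scope ring_scope.

Section Losses.
Context (R : realFieldType) (T : finType) (P N : {set T}) (s iou : T -> R).

(* step function (smoothing delta = 0); the value at 0 never matters for
   distinct logits, self-terms are handled by Hs *)
Definition iv (c : bool) : R := if c then 1 else 0.

Definition H (x : R) : R := if 0 < x then 1 else 0.

Definition Hs (i j : T) : R := if i == j then 1 else H (s j - s i).

(* Ratios: in MathComp x / 0 = 0, which matches the "zero denominator" convention. *)
Definition NFP (i : T) : R := \sum_(j in N) H (s j - s i).
Definition rank (i : T) : R := 1 + \sum_(j in P :|: N | j != i) H (s j - s i).
Definition rankp (i : T) : R := 1 + \sum_(j in P | j != i) H (s j - s i).
Definition lR (i : T) : R := NFP i / rank i.
Definition pR (j i : T) : R := H (s j - s i) / NFP i.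

Definition lS (i : T) : R :=
  (rankp i)^-1 * \sum_(j in P) Hs i j * (1 - iou j).
Definition lSstar (i : T) : R :=
  (\sum_(j in P) Hs i j * iv (iou i <= iou j) * (1 - iou j)) /
  (\sum_(j in P) Hs i j * iv (iou i <= iou j)).
Definition pS (j i : T) : R :=
  Hs i j * iv (iou j < iou i) / (\sum_(k in P) Hs i k * iv (iou k < iou i)).

Definition invP : R := (#|P|%:R)^-1.

Definition gAP_pos (i : T) : R := - (invP * lR i).
Definition gAP_neg (i : T) : R := invP * \sum_(j in P) lR j * pR i j.
Definition gRS_pos (i : T) : R :=
  invP * (- lR i + lSstar i - lS i + \sum_(j in P) (lS j - lSstar j) * pS i j).
Definition gRS_neg (i : T) : R := gAP_neg i.

(* Buckets: positives' logits sorted decreasingly; shat`_(k-1) is \hat s^+_k. *)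
Definition shat : seq R := sort (fun x y => y <= x) [seq s j | j in P].

(* bucket B_k for 1 <= k <= |P|+1 *)
Definition B (k : nat) : {set T} :=
  [set n in N | ((k == 1)%N || (s n < shat`_(k.-2))) &&
                ((k == #|P|.+1)%N || (shat`_(k.-1) < s n))].
Definition b (k : nat) : nat := #|B k|.
Definition sb (k : nat) : R := (\sum_(n in B k) s n) / (b k)%:R.

Definition NbFP (i : T) : R :=
  \sum_(1 <= k < #|P|.+2 | (0 < b k)%N) H (sb k - s i) * (b k)%:R.
Definition lbR (i : T) : R := NbFP i / (\sum_(j in P) Hs i j + NbFP i).
Definition pb (k : nat) (i : T) : R := (b k)%:R * H (sb k - s i) / NbFP i.

Definition gBAP_pos (i : T) : R := - (invP * lbR i).
(* gradient of a negative lying in bucket B_k *)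
Definition gBAP_neg (k : nat) : R :=
  invP * \sum_(j in P) lbR j * pb k j / (b k)%:R.
Definition gBRS_pos (i : T) : R :=
  invP * (- lbR i + lSstar i - lS i + \sum_(j in P) (lS j - lSstar j) * pS i j).
Definition gBRS_neg (k : nat) : R := gBAP_neg k.

End Losses.

(* Main.v *)
Require Import Defs.
From mathcomp Require Import all_boot all_order all_algebra.
Import Order.TTheory GRing.Theory Num.Theory.
Local Open Scope ring_scope.
From mathcomp Require Import zify.
Set Implicit Arguments. Unset Strict Implicit.

Section Proofs.
Variables (R : realFieldType) (T : finType) (P N : {set T}) (s iou : T -> R).
Hypothesis dPN : [disjoint P & N].
Hypothesis P0 : (0 < #|P|)%N.
Hypothesis sinj : {in P :|: N &, injective s}.

Local Notation sh := (shat P s).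

Lemma size_sh : size sh = #|P|.
Proof. by rewrite /shat size_sort size_map -cardE. Qed.

Lemma sorted_sh : sorted (fun x y => y <= x) sh.
Proof. by apply: sort_sorted => x y; exact: le_total. Qed.

Lemma sh_mono a c : (a <= c)%N -> (c < #|P|)%N -> sh`_c <= sh`_a.
Proof.
move=> ac cP.
have := @sorted_leq_nth R (fun x y => y <= x) _ _ 0 sh sorted_sh a c.
apply; rewrite ?inE ?size_sh //; last by apply: leq_ltn_trans cP.
- by move=> x y z /= h1 h2; apply: le_trans h2 h1.

Qed.

Lemma mem_sh j : j \in P -> s j \in sh.
Proof. by move=> jP; rewrite mem_sort; apply: map_f; rewrite mem_enum. Qed.

Lemma sh_mem x : x \in sh -> exists2 j, j \in P & x = s j.
Proof. by rewrite mem_sort => /mapP [j]; rewrite mem_enum => jP ->; exists j. Qed.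

Definition side j k := (k <= (index (s j) sh).+1)%N.

Lemma inB n k : (n \in B P N s k) =
  [&& n \in N, ((k == 1)%N || (s n < sh`_(k.-2))) &
                ((k == #|P|.+1)%N || (sh`_(k.-1) < s n))].
Proof. by rewrite /B inE. Qed.

Lemma Bside j k n : j \in P -> (1 <= k <= #|P|.+1)%N -> n \in B P N s k ->
  if side j k then s j < s n else s n < s j.
Proof.
move=> jP /andP [k1 kP]; rewrite inB => /and3P [nN h1 h2].
have mi : (index (s j) sh < #|P|)%N by rewrite -size_sh index_mem mem_sh.
have nt : sh`_(index (s j) sh) = s j by rewrite nth_index // mem_sh.
rewrite /side; case: ifP => c.
- have kn : (k == #|P|.+1)%N = false.
    by apply/negbTE; rewrite neq_ltn ltnS (leq_trans c mi).
  rewrite kn /= in h2; apply: (le_lt_trans _ h2); rewrite -nt; apply: sh_mono => //.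
  by rewrite -ltnS prednK.
- have kn : (k == 1)%N = false by apply/negbTE; move: c; case: k {k1 kP h1 h2} => [|[]].
  rewrite kn /= in h1; apply: (lt_le_trans h1); rewrite -nt; apply: sh_mono.
  + by move/negbT: c; rewrite -ltnNge; case: k {kn h1 h2 k1 kP} => [|[]].
  + by case: k {kn h1 h2 k1 c} kP => [|[]] //= k; rewrite !ltnS.
Qed.

Lemma H_side j k n : j \in P -> (1 <= k <= #|P|.+1)%N -> n \in B P N s k ->
  H (s n - s j) = iv R (side j k).
Proof.
move=> jP kr nB; have := Bside jP kr nB; rewrite /H /iv subr_gt0.
case: (side j k) => h; first by rewrite h.
by rewrite ltNge ltW //.
Qed.
Lemma H_sb j k n0 : j \in P -> (1 <= k <= #|P|.+1)%N -> n0 \in B P N s k ->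
  H (sb P N s k - s j) = iv R (side j k).
Proof.
move=> jP kr n0B.
have b0 : (0 < b P N s k)%N by rewrite /b card_gt0; apply/set0Pn; exists n0.
have b0R : 0 < (b P N s k)%:R :> R by rewrite ltr0n.
have hs : has (fun n => n \in B P N s k) (index_enum T).
  by apply/hasP; exists n0 => //; rewrite mem_index_enum.
have hc : \sum_(n in B P N s k) s j = s j * (b P N s k)%:R by rewrite sumr_const mulr_natr.
rewrite /H /iv subr_gt0 /sb.
case c: (side j k).
- rewrite ltr_pdivlMr // -hc.
  have -> // : \sum_(n in B P N s k) s j < \sum_(n in B P N s k) s n.
  by apply: ltr_sum => // n nB; have := Bside jP kr nB; rewrite c.
- rewrite ltNge le_eqVlt negb_or ltr_pdivrMr // -hc.
  have -> : \sum_(n in B P N s k) s n < \sum_(n in B P N s k) s j.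
    by apply: ltr_sum => // n nB; have := Bside jP kr nB; rewrite c.
  by rewrite andbF.
Qed.
Lemma B_uniq n k k' : (1 <= k <= #|P|.+1)%N -> (1 <= k' <= #|P|.+1)%N ->
  n \in B P N s k -> n \in B P N s k' -> k = k'.
Proof.
have key : forall k k', (1 <= k)%N -> (k' <= #|P|.+1)%N -> (k < k')%N ->
    n \in B P N s k -> n \in B P N s k' -> False.
  move=> {}k {}k' k1 k'P kk'; rewrite !inB => /and3P [_ _ h2] /and3P [_ h1' _].
  have kn : (k == #|P|.+1)%N = false.
    by apply/negbTE; rewrite neq_ltn (leq_trans kk' k'P).
  have k'n : (k' == 1)%N = false.
    by apply/negbTE; rewrite neq_ltn (leq_ltn_trans k1 kk') orbT.
  rewrite kn /= in h2; rewrite k'n /= in h1'.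
  have : sh`_(k'.-2) <= sh`_(k.-1).
    apply: sh_mono.
    + clear -k1 kk'; lia.
    + clear -k'P P0; lia.
  by move=> h; have := lt_trans h2 h1'; rewrite ltNge h.
move=> /andP [k1 kP] /andP [k'1 k'P] nB nB'.
case: (ltngtP k k') => // c.
- by case: (key _ _ k1 k'P c nB nB').
- by case: (key _ _ k'1 kP c nB' nB).
Qed.

Lemma sh_neq n x : n \in N -> x \in sh -> x != s n.
Proof.
move=> nN /sh_mem [j jP ->]; apply/eqP => e.
have jn : j = n by apply: sinj; rewrite // inE ?jP ?nN ?orbT.
by move: (disjointFr dPN jP); rewrite jn nN.
Qed.

Lemma B_exists n : n \in N ->
  exists k, [&& (1 <= k)%N, (k <= #|P|.+1)%N & n \in B P N s k].
Proof.
move=> nN; set a := fun x => x < s n.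
have fs : (find a sh <= #|P|)%N by rewrite -size_sh find_size.
exists (find a sh).+1; rewrite /= ltnS fs inB nN /=.
apply/andP; split.
- case e: (find a sh) => [|f] //=.
  have fl : (f < find a sh)%N by rewrite e.
  have := before_find 0 fl; rewrite /a => /negbT; rewrite -leNgt le_eqVlt.
  have fsz : (f < size sh)%N by rewrite (leq_trans fl) // size_sh.
  by rewrite eq_sym (negbTE (sh_neq nN (mem_nth 0 fsz))).
- case: (ltngtP (find a sh) #|P|) fs => //= c _; last by rewrite c eqxx.
  have hs : has a sh by rewrite has_find size_sh.
  by have := nth_find 0 hs; rewrite /a => ->; rewrite orbT.
Qed.
Lemma rank_eq j : j \in P -> rank P N s j = \sum_(i in P) Hs s j i + NFP N s j.
Proof.
move=> jP; rewrite /rank /NFP big_mkcondr (eq_bigl [predU P & N]); last first.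
  by move=> i; rewrite !inE.
rewrite bigU // [in RHS](bigD1 j jP) /= /Hs eqxx addrA.
congr (_ + _).
- congr (_ + _); rewrite big_mkcondr; apply: eq_bigr => i _.
  by rewrite eq_sym; case: (j == i).
- apply: eq_bigr => i iN.
  have -> // : i != j by apply/eqP => e; move: (disjointFr dPN jP); rewrite -e iN.
Qed.

Lemma sum_buckets (f : T -> R) :
  \sum_(1 <= k < #|P|.+2) \sum_(n in B P N s k) f n = \sum_(n in N) f n.
Proof.
have per n : n \in N ->
    \sum_(1 <= k < #|P|.+2) (if n \in B P N s k then f n else 0) = f n.
  move=> nN; have [k0 /and3P [k01 k0P nB0]] := B_exists nN.
  have m0 : k0 \in index_iota 1 #|P|.+2 by rewrite mem_index_iota k01 ltnS.
  have u0 : uniq (index_iota 1 #|P|.+2) by rewrite /index_iota iota_uniq.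
  rewrite (bigD1_seq k0 m0 u0).
  rewrite nB0 big1_seq; first exact: addr0.
  move=> k /andP [kk0]; rewrite mem_index_iota => /andP [k1 kP].
  case: ifP => nB; last by [].
  case/negP: kk0; apply/eqP.
  apply: (@B_uniq n k k0 _ _ nB nB0).
  - by rewrite k1 -ltnS.
  - by rewrite k01 k0P.
rewrite [RHS](eq_bigr _ (fun n nN => esym (per n nN))) exchange_big /=.
apply: eq_big_nat => k _; rewrite -big_mkcondr; apply: eq_bigl => n.
by rewrite inB; case: (n \in N).
Qed.

Lemma NbFP_eq j : j \in P -> NbFP P N s j = NFP N s j.
Proof.
move=> jP; rewrite /NbFP /NFP -sum_buckets big_mkcond /=.
apply: eq_big_nat => k /andP [k1 kP]; have kr : (1 <= k <= #|P|.+1)%N by rewrite k1 -ltnS.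
case: ifP => [b0|/negbT]; last first.
  rewrite -leqNgt leqn0 => /eqP /cards0_eq ->; by rewrite big_set0.
have [n0 n0B] : exists n0, n0 \in B P N s k.
  by move: b0; rewrite /b card_gt0 => /set0Pn.
rewrite (H_sb jP kr n0B) (eq_bigr (fun _ => iv R (side j k))); last first.
  by move=> n nB; rewrite (H_side jP kr nB).
by rewrite sumr_const mulr_natr.
Qed.
Lemma cancel_aux (a x h F : R) : x != 0 -> a * (x * h / F) / x = a * (h / F).
Proof. by move=> x0; rewrite -mulrA [x * h]mulrC mulrAC mulfK. Qed.

Lemma lR_eq j : j \in P -> lbR P N s j = lR P N s j.
Proof. by move=> jP; rewrite /lbR /lR NbFP_eq // rank_eq. Qed.

Lemma neg_eq i k : i \in N -> (1 <= k <= #|P|.+1)%N -> i \in B P N s k ->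
  gBAP_neg P N s k = gAP_neg P N s i.
Proof.
move=> iN kr iB; rewrite /gBAP_neg /gAP_neg; congr (_ * _); apply: eq_bigr => j jP.
rewrite lR_eq // /pb /pR NbFP_eq // (H_sb jP kr iB) -(H_side jP kr iB).
have x0 : (b P N s k)%:R != 0 :> R.
  by rewrite pnatr_eq0 -lt0n /b card_gt0; apply/set0Pn; exists i.
exact: cancel_aux.
Qed.
End Proofs.

Theorem theorem1 (R : realFieldType) (T : finType) (P N : {set T})
    (s iou : T -> R) :
  [disjoint P & N] -> (0 < #|P|)%N ->
  {in P :|: N &, injective s} ->
  (forall i, i \in P -> 0 <= iou i <= 1) ->
  (forall i, i \in P ->
     gBAP_pos P N s i = gAP_pos P N s i /\
     gBRS_pos P N s iou i = gRS_pos P N s iou i) /\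
  (forall i, i \in N ->
     (exists k, [&& (1 <= k)%N, (k <= #|P|.+1)%N & i \in B P N s k]) /\
     (forall k, (1 <= k <= #|P|.+1)%N -> i \in B P N s k ->
        gBAP_neg P N s k = gAP_neg P N s i /\
        gBRS_neg P N s k = gRS_neg P N s i)).
Proof.
move=> dPN P0 sinj _; split.
- move=> i iP; rewrite /gBAP_pos /gAP_pos /gBRS_pos /gRS_pos.
  by rewrite (lR_eq dPN P0 sinj iP).
- move=> i iN; split; first by apply: B_exists.
  move=> k kr iB; have e := neg_eq dPN P0 sinj iN kr iB.
  by split; rewrite /gBRS_neg /gRS_neg.
Qed.
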